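(* Let $X$ be a Fréchet space and let $(T(t))_{t\geqslant0}$ be an exponentially equicontinuous $C_0$-semigroup on $X$ with generator $(A,D(A))$. Then \[-\infty\leqslant \operatorname{s}(A)\leqslant\omega_0(T)<+\infty.\]
   Context: A Fréchet space is a complete metrizable locally convex space; $\operatorname{cs}(X)$ denotes its continuous seminorms, a fundamental system is a subset $\Gamma\subseteq\operatorname{cs}(X)$ generating the topology, and $L(X)$ is the space of continuous linear maps $X\to X$. A set of operators in $L(X)$ is equicontinuous if for every continuous seminorm $q$ there exist a continuous seminorm $p$ and $C\geqslant0$ with $q(Sx)\leqslant Cp(x)$ for all operators $S$ in the set and all $x\in X$. A $C_0$-semigroup is a family $(T(t))_{t\geqslant0}\subseteq L(X)$ with $T(0)=\mathrm{id}_X$, $T(t+s)=T(t)T(s)$ for all $t,s\geqslant0$, and $t\mapsto T(t)x$ continuous on $[0,\infty)$ for every $x\in X$. It is exponentially equicontinuous of order $\omega\in\mathbb{R}$ if $\{e^{-\omega t}T(t)\}_{t\geqslant0}$ is equicontinuous, and exponentially equicontinuous if this holds for some $\omega\in\mathbb{R}$. The growth bound $\omega_0(T)$ is the infimum of all $\omega\in\mathbb{R}$ such that $\{e^{-\omega t}T(t)\}_{t\geqslant0}$ is equicontinuous. The generator is $Ax=\lim_{t\searrow0}\frac{T(t)x-x}{t}$ on $D(A)=\{x\in X: \lim_{t\searrow0}\frac{T(t)x-x}{t}\text{ exists}\}$. Let $L(X)_0$ denote the set of $B\in L(X)$ for which there is $\mu\in\mathbb{C}\setminus\{0\}$ such that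 $\{(\mu B)^n\}_{n\in\mathbb{N}_0}$ is equicontinuous (equivalently, bounded in the topology of uniform convergence on bounded sets). For a linear operator $A\colon D(A)\to X$ with $D(A)\subseteq X$ a linear subspace, put $\delta_A=\{\infty\}$ if $D(A)=X$ and $A\in L(X)_0$, and $\delta_A=\varnothing$ otherwise. The resolvent set is $\rho(A)=\{\lambda\in\mathbb{C}: \lambda-A\colon D(A)\to X\text{ is bijective and }R(\lambda,A)=(\lambda-A)^{-1}\in L(X)_0\}\cup\delta_A$, the spectrum is $\sigma(A)=(\mathbb{C}\cup\{\infty\})\setminus\rho(A)$, and the spectral bound is $\operatorname{s}(A)=\sup\{\operatorname{Re}\lambda:\lambda\in\sigma(A)\cap\mathbb{C}\}$ (with $\sup\varnothing=-\infty$). *)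

(* Defs.v *)
From HB Require Import structures.
From mathcomp Require Import all_boot all_order all_algebra.
From mathcomp Require Import all_classical all_reals.
From mathcomp Require Import all_analysis.
From mathcomp Require Import complex.

Set Implicit Arguments.
Unset Strict Implicit.
Unset Printing Implicit Defensive.

Import Order.TTheory GRing.Theory Num.Theory.
Local Open Scope ring_scope.
Local Open Scope classical_set_scope.

Section FrechetDefs.
Variable R : realType.
Variable X : lmodType R[i].

Definition seminorm (q : X -> R) : Prop :=
  (forall x, 0 <= q x) /\
  (forall x y, q (x + y) <= q x + q y) /\
  (forall (a : R[i]) x, q (a *: x) = Normc.normc a * q x).

(* A Fréchet space: X together with a countable fundamental system of
   seminorms P 0, P 1, ... generating a Hausdorff (separated) locally
   convex topology in which every Cauchy sequence converges. *)
Definition frechet (P : nat -> X -> R) : Prop :=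
  (forall n, seminorm (P n)) /\
  (forall x, (forall n, P n x = 0) -> x = 0) /\
  (forall u : nat -> X,
     (forall n (e : R), 0 < e -> exists N, forall k l, (N <= k)%N -> (N <= l)%N ->
        P n (u k - u l) < e) ->
     exists y, forall n (e : R), 0 < e -> exists N, forall k, (N <= k)%N ->
        P n (u k - y) < e).

Variable P : nat -> X -> R.

(* continuous seminorms cs(X) for the topology generated by P *)
Definition cseminorm (q : X -> R) : Prop :=
  seminorm q /\
  exists (m : nat) (C : R), 0 <= C /\ forall x, q x <= C * \sum_(i < m) P i x.

Definition linear_op (S : X -> X) : Prop :=
  forall (a : R[i]) x y, S (a *: x + y) = a *: S x + S y.

Definition cont_op (S : X -> X) : Prop :=
  forall q, cseminorm q -> cseminorm (fun x => q (S x)).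

Definition LX (S : X -> X) : Prop := linear_op S /\ cont_op S.

Definition equicont (I : Type) (F : I -> X -> X) : Prop :=
  forall q, cseminorm q -> exists p, cseminorm p /\
    exists C : R, 0 <= C /\ forall i x, q (F i x) <= C * p x.

(* C_0-semigroups (T t only matters for t >= 0) *)
Definition C0_semigroup (T : R -> X -> X) : Prop :=
  (forall t, 0 <= t -> LX (T t)) /\
  (forall x, T 0 x = x) /\
  (forall t s, 0 <= t -> 0 <= s -> forall x, T (t + s) x = T t (T s x)) /\
  (forall x t, 0 <= t -> forall n (e : R), 0 < e -> exists d : R, 0 < d /\
     forall s, 0 <= s -> `|s - t| < d -> P n (T s x - T t x) < e).

Definition rescaled (T : R -> X -> X) (w : R) : {t : R | 0 <= t} -> X -> X :=
  fun t x => (expR (- w * sval t))%:C%C *: T (sval t) x.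

Definition exp_equicont_of_order (T : R -> X -> X) (w : R) : Prop :=
  equicont (rescaled T w).

Definition exp_equicont (T : R -> X -> X) : Prop :=
  exists w : R, exp_equicont_of_order T w.

Definition growth_bound (T : R -> X -> X) : \bar R :=
  ereal_inf [set w%:E | w in [set w | exp_equicont_of_order T w]].

Definition lim_right0 (f : R -> X) (y : X) : Prop :=
  forall n (e : R), 0 < e -> exists d : R, 0 < d /\
    forall t, 0 < t -> t < d -> P n (f t - y) < e.

Definition generator (T : R -> X -> X) (D : set X) (A : X -> X) : Prop :=
  (forall x, D x <-> exists y, lim_right0 (fun t => (t^-1)%:C%C *: (T t x - x)) y) /\
  (forall x, D x -> lim_right0 (fun t => (t^-1)%:C%C *: (T t x - x)) (A x)).

Definition LX0 (B : X -> X) : Prop :=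
  LX B /\ exists mu : R[i], mu != 0 /\
    equicont (fun n : nat => iter n (fun x => mu *: B x)).

Definition resolvent_C (D : set X) (A : X -> X) (lam : R[i]) : Prop :=
  (forall x y, D x -> D y -> lam *: x - A x = lam *: y - A y -> x = y) /\
  (forall y, exists x, D x /\ lam *: x - A x = y) /\
  exists Rl : X -> X,
    (forall y, D (Rl y) /\ lam *: Rl y - A (Rl y) = y) /\ LX0 Rl.

(* points of C (not infinity) in the spectrum *)
Definition spectrum_C (D : set X) (A : X -> X) : set R[i] :=
  [set lam | ~ resolvent_C D A lam].

(* spectral bound, in the extended reals (sup of empty set = -oo) *)
Definition spectral_bound (D : set X) (A : X -> X) : \bar R :=
  ereal_sup [set (complex.Re lam)%:E | lam in spectrum_C D A].

End FrechetDefs.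

(* Main.v *)
Require Import Defs.
From HB Require Import structures.
From mathcomp Require Import all_boot all_order all_algebra.
From mathcomp Require Import all_classical all_reals.
From mathcomp Require Import all_analysis.
From mathcomp Require Import complex.
From mathcomp Require Import ring lra.
Set Implicit Arguments.
Unset Strict Implicit.
Unset Printing Implicit Defensive.
Import Order.TTheory GRing.Theory Num.Theory.
Local Open Scope ring_scope.
Local Open Scope classical_set_scope.
Lemma deriv0_lim (R : realType) (g : R -> R) (L : R) : is_derive (0:R) (1:R) g L ->
  forall e : R, 0 < e -> exists d : R, 0 < d /\ forall t : R, 0 < t -> t < d -> `|(g t - g 0) / t - L| < e.
Proof.
move=> Hd e e0.
have H1 : derivable g (0:R) (1:R) by case: Hd.
have H2 : 'D_(1:R) g (0:R) = L by case: Hd.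
rewrite /derivable in H1.
move: H1; rewrite /derive in H2; rewrite H2.
move=> /cvgrPdist_lt /(_ e e0).
rewrite near_withinE /= => /nbhs_ballP[d d0 Hb].
exists d; split => // t t0 td.
have := Hb t.
rewrite /ball /= sub0r normrN gtr0_norm // => /(_ td).
rewrite gt_eqF //= => /(_ isT).
rewrite distrC.
move=> H; apply: le_lt_trans H; rewrite le_eqVlt; apply/orP; left; apply/eqP; congr (Num.norm (_ - _)). rewrite addr0.
by rewrite mulrC; congr (_ * (g _ - _)); rewrite /GRing.scale /= mulr1.
Qed.

Lemma dlin (R : realType) (b : R) : is_derive (0:R) (1:R) (fun t : R => b * t) b.
Proof.
have := @is_deriveZ R R R id b 0 1 1 (is_derive_id _ _).
by rewrite /GRing.scale /= mulr1.
Qed.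

Lemma dexpcos (R : realType) (b c : R) : is_derive (0:R) (1:R) (fun t : R => expR (b * t) * cos (c * t)) b.
Proof.
have h1 := is_derive1_comp (is_derive_expR (b * 0)) (dlin b).
have h2 := is_derive1_comp (is_derive_cos (c * 0)) (dlin c).
have := is_deriveM h1 h2.
rewrite /= !mulr0 expR0 cos0 sin0.
rewrite oppr0 mul0r scaler0 add0r scale1r mul1r. exact.
Qed.

Lemma dexpsin (R : realType) (b c : R) : is_derive (0:R) (1:R) (fun t : R => expR (b * t) * sin (c * t)) c.
Proof.
have h1 := is_derive1_comp (is_derive_expR (b * 0)) (dlin b).
have h2 := is_derive1_comp (is_derive_sin (c * 0)) (dlin c).
have := is_deriveM h1 h2.
rewrite /= !mulr0 expR0 cos0 sin0.
rewrite scale0r addr0 scale1r mul1r. exact.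
Qed.

Definition Eu (R : realType) (u v : R) : R[i] := Complex (expR u * cos v) (expR u * sin v).

Lemma EuM (R : realType) (u v u' v' : R) : Eu u v * Eu u' v' = Eu (u + u') (v + v').
Proof.
rewrite /Eu; apply/eqP; rewrite eq_complex /= expRD cosD sinD; apply/andP; split; apply/eqP; ring.
Qed.

Lemma Eu00 (R : realType) : Eu (0:R) 0 = 1.
Proof. by rewrite /Eu expR0 cos0 sin0 mulr1 mulr0. Qed.

Lemma nc_Eu (R : realType) (u v : R) : Normc.normc (Eu u v) = expR u.
Proof.
rewrite /Eu /Normc.normc !exprMn -mulrDr cos2Dsin2 mulr1 sqrtr_sqr.
by rewrite ger0_norm // ltW // expR_gt0.
Qed.

Lemma nc_real (R : realType) (r : R) : Normc.normc (r%:C)%C = `|r|.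
Proof. by rewrite /Normc.normc /= expr0n /= addr0 sqrtr_sqr. Qed.

Lemma nc_ge0 (R : realType) (a : R[i]) : 0 <= Normc.normc a.
Proof. by case: a => x y; rewrite /Normc.normc sqrtr_ge0. Qed.

Lemma nc_le (R : realType) (x y : R) : Normc.normc (Complex x y) <= `|x| + `|y|.
Proof.
rewrite /Normc.normc -(ger0_norm (addr_ge0 (normr_ge0 x) (normr_ge0 y))) -sqrtr_sqr ler_wsqrtr //.
rewrite sqrrD !real_normK ?num_real //.
have : 0 <= `|x| * `|y| *+ 2 by rewrite mulrn_wge0 // mulr_ge0.
lra.
Qed.

Lemma Eu_lim (R : realType) (b c : R) : forall e : R, 0 < e -> exists d : R, 0 < d /\
  forall t : R, 0 < t -> t < d ->
  Normc.normc ((t^-1)%:C%C * (Eu (b * t) (c * t) - 1) - Complex b c) < e.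
Proof.
move=> e e0.
have e20 : 0 < e / 2 by lra.
have [d1 [d10 H1]] := deriv0_lim (dexpcos b c) e20.
have [d2 [d20 H2]] := deriv0_lim (dexpsin b c) e20.
exists (Num.min d1 d2); split; first by rewrite lt_min d10 d20.
move=> t t0; rewrite lt_min => /andP[td1 td2].
have := H1 t t0 td1; have := H2 t t0 td2.
rewrite !mulr0 expR0 cos0 sin0 mulr0 mulr1 subr0 => h2 h1.
apply: le_lt_trans (nc_le _ _) _.
rewrite /Eu /=.
suff : `|(expR (b * t) * cos (c * t) - 1) / t - b| + `|expR (b * t) * sin (c * t) / t - c| < e.
  by rewrite !mul0r !subr0 !addr0 ![t^-1 * _]mulrC.
lra.
Qed.
Lemma le0_eps (R : realType) (x : R) : (forall e, 0 < e -> x <= e) -> x <= 0.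
Proof.
move=> H; rewrite leNgt; apply/negP => x0.
have := H (x / 2); have : 0 < x / 2 by lra.
move=> h /(_ h); lra.
Qed.

Record evs (I : Type) := EvS {
  ev : (I -> Prop) -> Prop;
  ev_mono : forall A B : I -> Prop, (forall i, A i -> B i) -> ev A -> ev B;
  ev_and : forall A B : I -> Prop, ev A -> ev B -> ev (fun i => A i /\ B i);
  ev_true : ev (fun _ => True);
  ev_ex : forall A : I -> Prop, ev A -> exists i, A i }.

Definition evseq_ev (A : nat -> Prop) := exists N, forall k, (N <= k)%N -> A k.

Lemma evseq_mono (A B : nat -> Prop) : (forall i, A i -> B i) -> evseq_ev A -> evseq_ev B.
Proof. by move=> H [N HN]; exists N => k /HN /H. Qed.
Lemma evseq_and (A B : nat -> Prop) : evseq_ev A -> evseq_ev B -> evseq_ev (fun i => A i /\ B i).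
Proof.
move=> [N1 H1] [N2 H2]; exists (maxn N1 N2) => k hk; split.
  by apply: H1; apply: leq_trans hk; exact: leq_maxl.
by apply: H2; apply: leq_trans hk; exact: leq_maxr.
Qed.
Lemma evseq_true : evseq_ev (fun _ => True).
Proof. by exists 0%N. Qed.
Lemma evseq_ex (A : nat -> Prop) : evseq_ev A -> exists i, A i.
Proof. by move=> [N H]; exists N; apply: H. Qed.

Definition evseq := EvS evseq_mono evseq_and evseq_true evseq_ex.

Section EvR.
Variable R : realType.
Definition evr0_ev (A : R -> Prop) := exists d : R, 0 < d /\ forall t, 0 < t -> t < d -> A t.
Lemma evr0_mono (A B : R -> Prop) : (forall i, A i -> B i) -> evr0_ev A -> evr0_ev B.
Proof. by move=> H [d [d0 Hd]]; exists d; split => // t t0 td; apply: H; apply: Hd. Qed.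
Lemma evr0_and (A B : R -> Prop) : evr0_ev A -> evr0_ev B -> evr0_ev (fun i => A i /\ B i).
Proof.
move=> [d1 [d10 H1]] [d2 [d20 H2]]; exists (Num.min d1 d2); split.
  by rewrite lt_min d10 d20.
move=> t t0; rewrite lt_min => /andP[h1 h2]; split; [exact: H1 | exact: H2].
Qed.
Lemma evr0_true : evr0_ev (fun _ => True).
Proof. by exists 1; split. Qed.
Lemma evr0_ex (A : R -> Prop) : evr0_ev A -> exists i, A i.
Proof.
move=> [d [d0 H]]; exists (d / 2); apply: H; lra.
Qed.
Definition evr0 := EvS evr0_mono evr0_and evr0_true evr0_ex.
End EvR.

Section Frechet.
Variables (R : realType) (X : lmodType R[i]) (P : nat -> X -> R).
Hypothesis HP : frechet P.
Local Notation nc := (@Normc.normc R).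

Lemma ncN1 : nc (-1) = 1.
Proof. by rewrite /Normc.normc /= oppr0 expr0n addr0 sqrtr_sqr normrN1. Qed.

Lemma nc0 : nc 0 = 0.
Proof. exact: Normc.normc0. Qed.

Section Semi.
Variable q : X -> R.
Hypothesis hq : seminorm q.

Lemma sq_ge0 x : 0 <= q x.
Proof. by case: hq. Qed.
Lemma sqD x y : q (x + y) <= q x + q y.
Proof. by case: hq => _ []. Qed.
Lemma sqZ a x : q (a *: x) = nc a * q x.
Proof. by case: hq => _ []. Qed.
Lemma sq0 : q 0 = 0.
Proof. by rewrite -(scale0r 0) sqZ nc0 mul0r. Qed.
Lemma sqN x : q (- x) = q x.
Proof. by rewrite -scaleN1r sqZ ncN1 mul1r. Qed.
Lemma sqB x y : q (x - y) = q (y - x).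
Proof. by rewrite -sqN opprB. Qed.
Lemma sq_tri x y : q x <= q y + q (x - y).
Proof. by rewrite -{1}(addrNK y x) addrC sqD. Qed.
Lemma sq_sum (I : Type) (r : seq I) (F : I -> X) : q (\sum_(i <- r) F i) <= \sum_(i <- r) q (F i).
Proof.
elim: r => [|i r IH]; first by rewrite !big_nil sq0.
rewrite !big_cons; apply: le_trans (sqD _ _) _; exact: lerD.
Qed.
Lemma sqZr (r : R) x : q (r%:C%C *: x) = `|r| * q x.
Proof. by rewrite sqZ nc_real. Qed.
End Semi.

Lemma Psn n : seminorm (P n).
Proof. by case: HP => H _; exact: H. Qed.

Lemma sum_ge0P m x : 0 <= \sum_(i < m) P i x.
Proof. by apply: sumr_ge0 => i _; exact: (sq_ge0 (Psn i) x). Qed.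

Lemma Pcs n : cseminorm P (P n).
Proof.
split; first exact: Psn.
exists n.+1, 1; split => // x; rewrite mul1r big_ord_recr /=.
by rewrite lerDr sum_ge0P.
Qed.

Lemma cs_sn q : cseminorm P q -> seminorm q.
Proof. by case. Qed.

Section Lin.
Variable S : X -> X.
Hypothesis hS : linear_op S.
Lemma lin0 : S 0 = 0.
Proof.
have := hS 1 0 0; rewrite scale1r addr0 => /eqP.
by rewrite -subr_eq0 opprD addrA scale1r subrr sub0r oppr_eq0 => /eqP.
Qed.
Lemma linD x y : S (x + y) = S x + S y.
Proof. by have := hS 1 x y; rewrite !scale1r. Qed.
Lemma linZ a x : S (a *: x) = a *: S x.
Proof. by have := hS a x 0; rewrite !addr0 lin0 addr0. Qed.
Lemma linN x : S (- x) = - S x.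
Proof. by rewrite -scaleN1r linZ scaleN1r. Qed.
Lemma linB x y : S (x - y) = S x - S y.
Proof. by rewrite linD linN. Qed.
Lemma lin_sum (r : seq nat) (F : nat -> X) : S (\sum_(i <- r) F i) = \sum_(i <- r) S (F i).
Proof.
elim: r => [|i r IH]; first by rewrite !big_nil lin0.
by rewrite !big_cons linD IH.
Qed.
End Lin.

Definition cv I (E : evs I) (u : I -> X) (y : X) :=
  forall n (e : R), 0 < e -> ev E (fun i => P n (u i - y) < e).

Definition scv I (E : evs I) (c : I -> R[i]) (c0 : R[i]) :=
  forall e : R, 0 < e -> ev E (fun i => nc (c i - c0) < e).

Lemma sep x : (forall n, P n x = 0) -> x = 0.
Proof. by case: HP => _ [H _]; exact: H. Qed.

Lemma cv_unique I (E : evs I) u y1 y2 : cv E u y1 -> cv E u y2 -> y1 = y2.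
Proof.
move=> H1 H2; apply/eqP; rewrite -subr_eq0; apply/eqP; apply: sep => n.
apply/eqP; rewrite eq_le; apply/andP; split; last exact: sq_ge0 (Psn n) _.
apply: le0_eps => e e0.
have e20 : 0 < e / 2 by lra.
have [i [h1 h2]] := ev_ex (ev_and (H1 n _ e20) (H2 n _ e20)).
have -> : y1 - y2 = (y1 - u i) + (u i - y2) by rewrite addrA subrK.
apply: le_trans (sqD (Psn n) _ _) _.
rewrite (sqB (Psn n) y1); lra.
Qed.

Lemma cv_cs I (E : evs I) q u y : cseminorm P q -> cv E u y ->
  forall e : R, 0 < e -> ev E (fun i => q (u i - y) < e).
Proof.
move=> [hq [m [C [C0 HC]]]] Hu.
have Hs : forall m (e : R), 0 < e -> ev E (fun i => \sum_(j < m) P j (u i - y) < e).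
  elim=> [|k IH] e e0.
    by apply: ev_mono (ev_true E) => i _; rewrite big_ord0.
  have e20 : 0 < e / 2 by lra.
  apply: ev_mono (ev_and (IH _ e20) (Hu k _ e20)) => i [h1 h2].
  rewrite big_ord_recr /=; lra.
move=> e e0.
have ee : 0 < e / (C + 1) by apply: divr_gt0 => //; lra.
apply: ev_mono (Hs m _ ee) => i hi.
apply: le_lt_trans (HC _) _.
have hs := sum_ge0P m (u i - y).
have : C * \sum_(j < m) P j (u i - y) <= C * (e / (C + 1)).
  by apply: ler_wpM2l => //; exact: ltW.
have : C * (e / (C + 1)) < e.
  rewrite mulrA ltr_pdivrMr; last lra.
  nra.
lra.
Qed.

Lemma cv_le I (E : evs I) q u y (B : R) : cseminorm P q -> cv E u y ->
  (forall eta : R, 0 < eta -> ev E (fun i => q (u i) <= B + eta)) -> q y <= B.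
Proof.
move=> hq Hu HB.
have hs := cs_sn hq.
rewrite -subr_le0; apply: le0_eps => e e0.
have e20 : 0 < e / 2 by lra.
have [i [h1 h2]] := ev_ex (ev_and (HB _ e20) (cv_cs hq Hu e20)).
have := sq_tri hs y (u i); rewrite sqB //.
lra.
Qed.

Lemma cv_op I (E : evs I) S u y : LX P S -> cv E u y -> cv E (fun i => S (u i)) (S y).
Proof.
move=> [hl hc] Hu n e e0.
have hq := hc _ (Pcs n).
apply: ev_mono (cv_cs hq Hu e0) => i /=.
by rewrite linB.
Qed.

Lemma cv_add I (E : evs I) u v y z : cv E u y -> cv E v z -> cv E (fun i => u i + v i) (y + z).
Proof.
move=> Hu Hv n e e0.
have e20 : 0 < e / 2 by lra.
apply: ev_mono (ev_and (Hu n _ e20) (Hv n _ e20)) => i [h1 h2].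
have -> : u i + v i - (y + z) = (u i - y) + (v i - z) by rewrite opprD addrACA.
apply: le_lt_trans (sqD (Psn n) _ _) _; lra.
Qed.

Lemma cv_const I (E : evs I) y : cv E (fun _ => y) y.
Proof.
move=> n e e0; apply: ev_mono (ev_true E) => i _.
by rewrite subrr (sq0 (Psn n)).
Qed.

Lemma cv_scale I (E : evs I) c c0 u y : scv E c c0 -> cv E u y ->
  cv E (fun i => c i *: u i) (c0 *: y).
Proof.
move=> Hc Hu n e e0.
have hp := Psn n.
set py := P n y.
have py0 : 0 <= py := sq_ge0 hp y.
have nc00 : 0 <= nc c0 := nc_ge0 c0.
have e1 : 0 < e / 2 / (nc c0 + 1) by apply: divr_gt0; lra.
have e2 : 0 < Num.min 1 (e / 2 / (py + 1)).
  by rewrite lt_min ltr01 /=; apply: divr_gt0; lra.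
apply: ev_mono (ev_and (Hc _ e2) (Hu n _ e1)) => i [h1 h2].
move: h1; rewrite lt_min => /andP[h1 h1'].
have -> : c i *: u i - c0 *: y = c i *: (u i - y) + (c i - c0) *: y.
  by rewrite scalerBr scalerBl addrA subrK.
apply: le_lt_trans (sqD hp _ _) _.
rewrite !(sqZ hp).
have hci : nc (c i) <= nc c0 + 1.
  have := le_normcD (c i - c0) c0; rewrite subrK.
  move=> H; apply: le_trans H _; lra.
have hu0 := sq_ge0 hp (u i - y).
have t1 : nc (c i) * P n (u i - y) <= (nc c0 + 1) * P n (u i - y).
  by apply: ler_wpM2r.
have t1' : (nc c0 + 1) * P n (u i - y) < e / 2.
  by rewrite mulrC -ltr_pdivlMr; last lra.
have t2 : nc (c i - c0) * py <= e / 2 / (py + 1) * py.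
  by apply: ler_wpM2r => //; exact: ltW.
have t2' : e / 2 / (py + 1) * py <= e / 2.
  rewrite mulrAC ler_pdivrMr; last lra.
  have : 0 <= e / 2 by lra.
  nra.
rewrite -/py; lra.
Qed.

Lemma scv_const I (E : evs I) c : scv E (fun _ => c) c.
Proof. by move=> e e0; apply: ev_mono (ev_true E) => i _; rewrite subrr nc0. Qed.


Lemma cv_ext I (E : evs I) u v y : ev E (fun i => u i = v i) -> cv E u y -> cv E v y.
Proof. by move=> He Hu n e e0; apply: ev_mono (ev_and He (Hu n e e0)) => i [<-]. Qed.

Lemma cv_opp I (E : evs I) u y : cv E u y -> cv E (fun i => - u i) (- y).
Proof.
move=> Hu n e e0; apply: ev_mono (Hu n e e0) => i.
by rewrite -opprD (sqN (Psn n)).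
Qed.

Lemma cv_sub I (E : evs I) u v y z : cv E u y -> cv E v z -> cv E (fun i => u i - v i) (y - z).
Proof. by move=> Hu Hv; apply: cv_add Hu (cv_opp Hv). Qed.

End Frechet.
Lemma sum_blocks (V : zmodType) (F : nat -> V) (a b : nat) :
  \sum_(0 <= l < a * b) F l = \sum_(0 <= j < a) \sum_(0 <= i < b) F (j * b + i)%N.
Proof.
elim: a => [|a IH]; first by rewrite mul0n !big_geq.
rewrite mulSnr (@big_cat_nat _ _ _ (a * b)) ?leq_addr // IH big_nat_recr //=.
congr (_ + _).
by rewrite -{1}[(a * b)%N]add0n big_addn addKn; apply: eq_bigr => i _; rewrite addnC.
Qed.

Lemma sum_shift (V : zmodType) (F : nat -> V) (N M : nat) :
  \sum_(N <= j < N + M) F j = \sum_(0 <= j < M) F (j + N)%N.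
Proof. by rewrite -{1}[N]add0n big_addn addKn. Qed.


Lemma scv_dEu (R : realType) (b c : R) :
  scv (evr0 R) (fun t => (t^-1)%:C%C * (Eu (b * t) (c * t) - 1)) (Complex b c).
Proof. move=> e e0; exact: Eu_lim. Qed.

Lemma scv_Eu (R : realType) (b c : R) : scv (evr0 R) (fun t => Eu (b * t) (c * t)) 1.
Proof.
move=> e e0.
set L := Normc.normc (Complex b c).
have L0 : 0 <= L := nc_ge0 _.
have [d [d0 Hd]] := Eu_lim b c ltr01.
have e1 : 0 < e / (L + 1) by apply: divr_gt0; lra.
exists (Num.min d (e / (L + 1))); split; first by rewrite lt_min d0 e1.
move=> t t0; rewrite lt_min => /andP[td te].
have H := Hd t t0 td.
set z := Eu (b * t) (c * t) - 1 in H *.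
have Hz : Normc.normc ((t^-1)%:C%C * z) <= L + 1.
  have := le_normcD ((t^-1)%:C%C * z - Complex b c) (Complex b c); rewrite subrK -/L.
  move=> H2; apply: le_trans H2 _; lra.
have -> : z = (t%:C%C) * ((t^-1)%:C%C * z).
  rewrite mulrA -rmorphM /= mulfV; last by rewrite gt_eqF.
  by rewrite rmorph1 mul1r.
rewrite Normc.normcM nc_real gtr0_norm //.
have : t * Normc.normc ((t^-1)%:C%C * z) <= t * (L + 1) by apply: ler_wpM2l => //; exact: ltW.
move: te; rewrite ltr_pdivlMr; last lra.
have nz := nc_ge0 ((t^-1)%:C%C * z).
nra.
Qed.

Section Semigroup.
Variables (R : realType) (X : lmodType R[i]) (P : nat -> X -> R).
Hypothesis HP : frechet P.
Variables (T : R -> X -> X) (D : set X) (A : X -> X).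
Hypothesis HT : C0_semigroup P T.
Hypothesis HG : generator P T D A.
Variable w : R.
Hypothesis Hw : exp_equicont_of_order P T w.
Variable lam : R[i].
Hypothesis Hlam : w < complex.Re lam.
Local Notation nc := (@Normc.normc R).

Definition aa := complex.Re lam - w.
Lemma aa_gt0 : 0 < aa.
Proof. by rewrite /aa subr_gt0. Qed.

Lemma TLX t : 0 <= t -> LX P (T t).
Proof. by case: HT => H _; exact: H. Qed.
Lemma Tlin t : 0 <= t -> linear_op (T t).
Proof. by move=> /TLX []. Qed.
Lemma T0 x : T 0 x = x.
Proof. by case: HT => _ [H _]; exact: H. Qed.
Lemma TD t s x : 0 <= t -> 0 <= s -> T (t + s) x = T t (T s x).
Proof. by move=> t0 s0; case: HT => _ [_ [H _]]; exact: H. Qed.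
Lemma Tcont x t : 0 <= t -> forall n (e : R), 0 < e -> exists d : R, 0 < d /\
     forall s, 0 <= s -> `|s - t| < d -> P n (T s x - T t x) < e.
Proof. by case: HT => _ [_ [_ H]]; exact: H. Qed.

Definition Tb q p C := forall t x, 0 <= t -> q (T t x) <= C * expR (w * t) * p x.

Lemma Tbound q : cseminorm P q -> exists p, cseminorm P p /\ exists C : R, 0 <= C /\ Tb q p C.
Proof.
move=> hq; have [p [hp [C [C0 HC]]]] := Hw hq.
exists p; split => //; exists C; split => // t x t0.
have := HC (exist _ t t0) x; rewrite /rescaled /= (sqZr (cs_sn hq)).
rewrite ger0_norm; last exact/ltW/expR_gt0.
move=> H.
have e0 := expR_gt0 (w * t).
have -> : q (T t x) = expR (w * t) * (expR (- w * t) * q (T t x)).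
  by rewrite mulrA -expRD mulNr subrr expR0 mul1r.
have -> : C * expR (w * t) * p x = expR (w * t) * (C * p x) by ring.
by apply: ler_wpM2l => //; exact: ltW.
Qed.

Definition E (t : R) : R[i] := Eu (- complex.Re lam * t) (- complex.Im lam * t).
Lemma ncE t : nc (E t) = expR (- complex.Re lam * t).
Proof. exact: nc_Eu. Qed.
Lemma ED s t : E (s + t) = E s * E t.
Proof. by rewrite /E EuM !mulrDr. Qed.
Lemma E0 : E 0 = 1.
Proof. by rewrite /E !mulr0 Eu00. Qed.

Definition f y t := E t *: T t y.
Lemma f0 y : f y 0 = y.
Proof. by rewrite /f E0 scale1r T0. Qed.

Lemma fshift y s r : 0 <= s -> 0 <= r -> f y (s + r) = E s *: T s (f y r).
Proof.
by move=> s0 r0; rewrite /f ED TD // (linZ (Tlin s0)) scalerA.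
Qed.

Lemma fdiff y s r : 0 <= s -> 0 <= r -> f y (s + r) - f y s = E s *: T s (f y r - y).
Proof.
by move=> s0 r0; rewrite fshift // (linB (Tlin s0)) scalerBr.
Qed.

Lemma fbound q p C : Tb q p C -> seminorm q -> 0 <= C -> (forall v, 0 <= p v) ->
   forall t v, 0 <= t -> q (E t *: T t v) <= C * expR (- aa * t) * p v.
Proof.
move=> Hb hq C0 hp t v t0.
rewrite (sqZ hq) ncE.
apply: le_trans (ler_wpM2l (ltW (expR_gt0 _)) (Hb t v t0)) _.
rewrite le_eqVlt; apply/orP; left; apply/eqP.
have -> : - aa * t = - complex.Re lam * t + w * t by rewrite /aa; ring.
rewrite expRD; ring.
Qed.

Definition h (k : nat) : R := ((2 ^ k)%:R)^-1.
Lemma h_gt0 k : 0 < h k.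
Proof. by rewrite /h invr_gt0 ltr0n expn_gt0. Qed.
Lemma h_le1 k : h k <= 1.
Proof. by rewrite /h invr_le1 ?ler1n ?ltr0n ?expn_gt0 // unitfE pnatr_eq0 -lt0n expn_gt0. Qed.

Lemma hmk k m : (k <= m)%N -> (2 ^ (m - k))%:R * h m = h k.
Proof.
move=> km; rewrite /h.
have -> : (2 ^ m)%N = (2 ^ k * 2 ^ (m - k))%N by rewrite -expnD subnKC.
by rewrite natrM invfM mulrCA mulfV ?mulr1 // pnatr_eq0 -lt0n expn_gt0.
Qed.

Lemma hk_nat k m : (k * 2 ^ m)%:R * h m = k%:R.
Proof.
by rewrite natrM -mulrA /h mulfV ?mulr1 // pnatr_eq0 -lt0n expn_gt0.
Qed.

Lemma pos_id j i k m : (k <= m)%N -> (j * 2 ^ (m - k) + i)%N%:R * h m = j%:R * h k + i%:R * h m.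
Proof. by move=> km; rewrite natrD natrM mulrDl -mulrA hmk. Qed.

Lemma pos_lt i k m : (k <= m)%N -> (i < 2 ^ (m - k))%N -> i%:R * h m < h k.
Proof. by move=> km ik; rewrite -(hmk km) ltr_pM2r ?h_gt0 // ltr_nat. Qed.

Definition Nk k := (k * 2 ^ k)%N.

Definition I k y := \sum_(0 <= j < Nk k) (h k)%:C%C *: f y (j%:R * h k).

Definition K := expR aa / aa.
Lemma K_gt0 : 0 < K.
Proof. by rewrite /K divr_gt0 ?expR_gt0 ?aa_gt0. Qed.

Lemma geom_sum (r : R) n : \sum_(0 <= j < n) r ^+ j * (1 - r) = 1 - r ^+ n.
Proof.
elim: n => [|n IH]; first by rewrite big_geq // expr0 subrr.
by rewrite big_nat_recr //= IH exprS; ring.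
Qed.

Lemma geom (hh c : R) n : 0 < hh -> hh <= 1 -> 0 <= c ->
  \sum_(0 <= j < n) hh * expR (- aa * (c + j%:R * hh)) <= expR (- aa * c) * K.
Proof.
move=> h0 h1 c0.
have a0 := aa_gt0.
set r := expR (- aa * hh).
have r0 : 0 < r by exact: expR_gt0.
have r1 : r < 1 by rewrite /r -expR0 ltr_expR; nra.
have -> : \sum_(0 <= j < n) hh * expR (- aa * (c + j%:R * hh)) =
          hh * expR (- aa * c) * \sum_(0 <= j < n) r ^+ j.
  rewrite mulr_sumr; apply: eq_bigr => j _.
  rewrite /r -expRM_natl -mulrA -expRD; congr (_ * expR _); ring.
have Hs : \sum_(0 <= j < n) r ^+ j <= (1 - r)^-1.
  rewrite -[(1 - r)^-1]div1r ler_pdivlMr ?subr_gt0 // mulr_suml geom_sum.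
  rewrite lerBlDr lerDl; exact/exprn_ge0/ltW.
have Hs0 : 0 <= \sum_(0 <= j < n) r ^+ j by apply: sumr_ge0 => j _; exact/exprn_ge0/ltW.
have eE := expR_gt0 (- aa * c).
apply: (@le_trans _ _ (hh * expR (- aa * c) * (1 - r)^-1)).
  by apply: ler_wpM2l => //; apply: mulr_ge0; [exact: ltW | exact: ltW].
rewrite mulrAC [X in _ <= X]mulrC; apply: ler_wpM2r; first exact: ltW.
rewrite ler_pdivrMr ?subr_gt0 //.
(* hh <= K * (1 - r) *)
have F2 : expR (aa * hh) * r = 1 by rewrite /r -expRD mulNr subrr expR0.
have F3 := expR_ge1Dx (aa * hh).
have F1 : 1 <= expR aa * r.
  by rewrite /r -expRD -expR0 ler_expR; nra.
have Hr : r * (aa * hh) <= 1 - r.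
  have : r * (1 + aa * hh) <= r * expR (aa * hh) by apply: ler_wpM2l => //; exact: ltW.
  rewrite [r * expR _]mulrC F2; lra.
rewrite /K.
have : expR aa * (r * (aa * hh)) <= expR aa * (1 - r) by apply: ler_wpM2l => //; exact/ltW/expR_gt0.
have : hh * aa <= expR aa * r * (aa * hh).
  have : 0 <= aa * hh by nra.
  nra.
move=> H1 H2.
rewrite mulrAC ler_pdivlMr //; nra.
Qed.

Lemma tailb q p C y hh N M : Tb q p C -> seminorm q -> 0 <= C -> (forall v, 0 <= p v) ->
  0 < hh -> hh <= 1 ->
  q (\sum_(N <= j < N + M) hh%:C%C *: f y (j%:R * hh)) <= C * K * expR (- aa * (N%:R * hh)) * p y.
Proof.
move=> Hb hq C0 hp h0 h1.
apply: le_trans (sq_sum hq _ _) _.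
apply: (@le_trans _ _ (\sum_(N <= j < N + M) hh * (C * expR (- aa * (j%:R * hh)) * p y))).
  apply: ler_sum => j _; rewrite (sqZr hq) ger0_norm; last exact: ltW.
  apply: ler_wpM2l; first exact: ltW.
  apply: fbound => //; apply: mulr_ge0 => //; exact: ltW.
rewrite sum_shift.
have -> : \sum_(0 <= j < M) hh * (C * expR (- aa * ((j + N)%N%:R * hh)) * p y) =
   C * p y * \sum_(0 <= j < M) hh * expR (- aa * (N%:R * hh + j%:R * hh)).
  rewrite mulr_sumr; apply: eq_bigr => j _; rewrite natrD.
  have -> : - aa * ((j%:R + N%:R) * hh) = - aa * (N%:R * hh + j%:R * hh) by ring.
  ring.
have := geom M h0 h1 (mulr_ge0 (ler0n _ N) (ltW h0)).
move=> H.
have Cp : 0 <= C * p y by apply: mulr_ge0.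
apply: le_trans (ler_wpM2l Cp H) _.
rewrite le_eqVlt; apply/orP; left; apply/eqP; ring.
Qed.


Lemma Icauchy q p C y k m (eta : R) : Tb q p C -> seminorm q -> 0 <= C -> (forall v, 0 <= p v) ->
  (k <= m)%N -> (forall r, 0 <= r -> r < h k -> p (f y r - y) <= eta) ->
  q (I m y - I k y) <= C * K * eta + C * K * expR (- aa * k%:R) * p y.
Proof.
move=> Hb hq C0 hp km Heta.
have eta0 : 0 <= eta.
  have := Heta 0 (lexx _) (h_gt0 k); have := hp (f y 0 - y); lra.
set b := (2 ^ (m - k))%N.
have Nm : Nk m = (Nk k * b + (m - k) * 2 ^ m)%N.
  by rewrite /Nk /b -mulnA -expnD subnKC // -mulnDl subnKC.
have Hsplit : I m y = \sum_(0 <= j < Nk k) \sum_(0 <= i < b) (h m)%:C%C *: f y ((j * b + i)%N%:R * h m)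
   + \sum_(Nk k * b <= l < Nk k * b + (m - k) * 2 ^ m) (h m)%:C%C *: f y (l%:R * h m).
  by rewrite /I Nm (@big_cat_nat _ _ _ (Nk k * b)) ?leq_addr //= sum_blocks.
have HIk : I k y = \sum_(0 <= j < Nk k) \sum_(0 <= i < b) (h m)%:C%C *: f y (j%:R * h k).
  rewrite /I; apply: eq_bigr => j _; rewrite sumr_const_nat subn0 scalerMnl; congr (_ *: _).
  by rewrite -rmorphMn /= -mulr_natl /b hmk.
rewrite Hsplit HIk addrAC -sumrB.
apply: le_trans (sqD hq _ _) _; apply: lerD; last first.
  have := @tailb q p C y (h m) (Nk k * b) ((m - k) * 2 ^ m) Hb hq C0 hp (h_gt0 m) (h_le1 m).
  by rewrite /Nk /b -mulnA -expnD subnKC // hk_nat.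
apply: le_trans (sq_sum hq _ _) _.
apply: (@le_trans _ _ (\sum_(0 <= j < Nk k) h k * (C * expR (- aa * (j%:R * h k)) * eta))).
  apply: ler_sum => j _; rewrite -sumrB.
  apply: le_trans (sq_sum hq _ _) _.
  apply: (@le_trans _ _ (\sum_(0 <= i < b) h m * (C * expR (- aa * (j%:R * h k)) * eta))).
    apply: ler_sum_nat => i /andP[_ ib].
    rewrite -scalerBr (sqZr hq) ger0_norm; last exact/ltW/h_gt0.
    apply: ler_wpM2l; first exact/ltW/h_gt0.
    have jk0 : 0 <= j%:R * h k by apply: mulr_ge0; [exact: ler0n | exact/ltW/h_gt0].
    have im0 : 0 <= i%:R * h m by apply: mulr_ge0; [exact: ler0n | exact/ltW/h_gt0].
    rewrite pos_id // fdiff //.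
    apply: le_trans (fbound Hb hq C0 hp _ jk0) _.
    apply: ler_wpM2l; first by apply: mulr_ge0 => //; exact/ltW/expR_gt0.
    by apply: Heta => //; exact: pos_lt.
  by rewrite sumr_const_nat subn0 -mulrnAl -[h m *+ b]mulr_natl /b hmk.
have -> : \sum_(0 <= j < Nk k) h k * (C * expR (- aa * (j%:R * h k)) * eta) =
   C * eta * \sum_(0 <= j < Nk k) h k * expR (- aa * (0 + j%:R * h k)).
  by rewrite mulr_sumr; apply: eq_bigr => j _; rewrite add0r; ring.
have Ce : 0 <= C * eta by apply: mulr_ge0.
apply: le_trans (ler_wpM2l Ce (geom _ (h_gt0 k) (h_le1 k) (lexx 0))) _.
by rewrite mulr0 expR0 mul1r le_eqVlt; apply/orP; left; apply/eqP; ring.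
Qed.


Lemma cvT0 y : cv P (evr0 R) (fun r => T r y) y.
Proof.
move=> n e e0; have [d [d0 Hd]] := Tcont y (lexx 0) n e0.
exists d; split => // t t0 td.
by have := Hd t (ltW t0); rewrite subr0 gtr0_norm // T0; apply.
Qed.

Lemma scvE : scv (evr0 R) E 1.
Proof. exact: (scv_Eu (- complex.Re lam) (- complex.Im lam)). Qed.

Lemma fcont y : cv P (evr0 R) (f y) y.
Proof. by have := cv_scale HP scvE (cvT0 y); rewrite scale1r. Qed.

Lemma k_large (B : R) : exists k0, forall k, (k0 <= k)%N -> B < k%:R.
Proof.
exists (Num.trunc (Num.max B 0)).+1 => k hk.
have H1 := truncnS_gt (Num.max B 0).
have H2 : B <= Num.max B 0 by rewrite le_max lexx.
have H3 : ((Num.trunc (Num.max B 0)).+1%:R : R) <= k%:R by rewrite ler_nat.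
lra.
Qed.

Lemma h_small d : 0 < d -> exists k0, forall k, (k0 <= k)%N -> h k < d.
Proof.
move=> d0; have [k0 H] := k_large d^-1.
exists k0 => k hk.
have H1 : d^-1 < (2 ^ k)%:R.
  apply: lt_le_trans (H k hk) _; rewrite ler_nat; exact/ltnW/ltn_expl.
rewrite /h -[d]invrK ltf_pV2 ?posrE ?invr_gt0 ?ltr0n ?expn_gt0 //.
Qed.

Lemma exp_small M eps : 0 < eps -> exists k0, forall k, (k0 <= k)%N -> expR (- aa * k%:R) * M < eps.
Proof.
move=> e0; have a0 := aa_gt0.
have [k0 H] := k_large (`|M| / (eps * aa)).
exists k0 => k hk.
have Hk := H k hk.
have ea : 0 < eps * aa by apply: mulr_gt0.
move: Hk; rewrite ltr_pdivrMr // => Hk.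
have F1 := expR_ge1Dx (aa * k%:R).
have F2 : expR (- aa * k%:R) * expR (aa * k%:R) = 1 by rewrite -expRD mulNr addNr expR0.
have F3 := expR_gt0 (- aa * k%:R).
have F4 : M <= `|M| := ler_norm M.
have k0' : 0 <= (k%:R : R) := ler0n _ _.
have : `|M| < eps * expR (aa * k%:R) by nra.
move=> H5.
have : expR (- aa * k%:R) * `|M| < expR (- aa * k%:R) * (eps * expR (aa * k%:R)).
  by rewrite ltr_pM2l.
have -> : expR (- aa * k%:R) * (eps * expR (aa * k%:R)) = eps.
  by rewrite mulrCA F2 mulr1.
nra.
Qed.

Lemma I_cauchy y : forall n (e : R), 0 < e -> exists N, forall k l, (N <= k)%N -> (N <= l)%N ->
  P n (I k y - I l y) < e.
Proof.
move=> n e e0.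
have [p [hp [C [C0 Hb]]]] := Tbound (Pcs HP n).
have hp0 : forall v, 0 <= p v := sq_ge0 (cs_sn hp).
have K0 := K_gt0.
have CK0 : 0 <= C * K by apply: mulr_ge0 => //; exact: ltW.
set eta := e / 2 / (C * K + 1).
have eta0 : 0 < eta by apply: divr_gt0; lra.
have Ceta : C * K * eta < e / 2.
  have -> : C * K * eta = e / 2 * (C * K / (C * K + 1)) by rewrite /eta mulrA [_ * (e / 2)]mulrC mulrA.
  have : C * K / (C * K + 1) < 1 by rewrite ltr_pdivrMr; lra.
  have : 0 < e / 2 by lra.
  nra.
have [d [d0 Hd]] := cv_cs HP hp (fcont y) eta0.
have [k1 Hk1] := h_small d0.
have e20 : 0 < e / 2 by lra.
have [k2 Hk2] := exp_small (C * K * p y) e20.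
exists (maxn k1 k2) => k l hk hl.
have H1 : forall k l, (maxn k1 k2 <= k)%N -> (k <= l)%N -> P n (I l y - I k y) < e.
  move=> {hk hl}k {}l hk kl.
  have hkk1 : (k1 <= k)%N by apply: leq_trans hk; exact: leq_maxl.
  have hkk2 : (k2 <= k)%N by apply: leq_trans hk; exact: leq_maxr.
  have Heta : forall r, 0 <= r -> r < h k -> p (f y r - y) <= eta.
    move=> r r0 rk; have rd : r < d by apply: lt_trans rk (Hk1 _ hkk1).
    have [->|r0'] := eqVneq r 0.
      by rewrite f0 subrr (sq0 (cs_sn hp)); exact: ltW.
    have r0'' : 0 < r by rewrite lt_def r0' r0.
    have := Hd r r0'' rd; rewrite /=; exact: ltW.
  have := Icauchy Hb (Psn HP n) C0 hp0 kl Heta.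
  have := Hk2 k hkk2.
  have -> : C * K * expR (- aa * k%:R) * p y = expR (- aa * k%:R) * (C * K * p y) by ring.
  lra.
case: (leqP k l) => kl.
  by rewrite (sqB (Psn HP n)); apply: H1.
by apply: H1 => //; exact: ltnW.
Qed.

Lemma I_lim y : exists z, cv P evseq (fun k => I k y) z.
Proof. by case: HP => _ [_ Hc]; apply: Hc; exact: I_cauchy. Qed.

Definition Rl y := projT1 (cid (I_lim y)).
Lemma Rl_cv y : cv P evseq (fun k => I k y) (Rl y).
Proof. exact: (projT2 (cid (I_lim y))). Qed.

Lemma nodes_ge0 j k : 0 <= j%:R * h k.
Proof. by apply: mulr_ge0; [exact: ler0n | exact/ltW/h_gt0]. Qed.

Lemma I_lin k c x y : I k (c *: x + y) = c *: I k x + I k y.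
Proof.
rewrite /I scaler_sumr -big_split /=; apply: eq_bigr => j _.
rewrite /f (linD (Tlin (nodes_ge0 j k))) (linZ (Tlin (nodes_ge0 j k))).
by rewrite !scalerDr !scalerA; congr (_ *: _ + _); ring.
Qed.

Lemma Rl_lin : linear_op Rl.
Proof.
move=> c x y.
apply: (cv_unique HP (Rl_cv (c *: x + y))).
have := cv_add HP (cv_scale HP (scv_const evseq c) (Rl_cv x)) (Rl_cv y).
by under eq_fun do rewrite -I_lin.
Qed.

Lemma I_bound q p C y k : Tb q p C -> seminorm q -> 0 <= C -> (forall v, 0 <= p v) ->
  q (I k y) <= C * K * p y.
Proof.
move=> Hb hq C0 hp.
have := @tailb q p C y (h k) 0 (Nk k) Hb hq C0 hp (h_gt0 k) (h_le1 k).
by rewrite mul0r mulr0 expR0 mulr1.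
Qed.

Lemma Rl_bound q p C y : cseminorm P q -> Tb q p C -> 0 <= C -> (forall v, 0 <= p v) ->
  q (Rl y) <= C * K * p y.
Proof.
move=> hq Hb C0 hp.
apply: (cv_le HP hq (Rl_cv y)) => eta eta0.
apply: ev_mono (ev_true evseq) => k _.
have := I_bound y k Hb (cs_sn hq) C0 hp; lra.
Qed.

Lemma Rl_LX : LX P Rl.
Proof.
split; first exact: Rl_lin.
move=> q hq.
have [p [hp [C [C0 Hb]]]] := Tbound hq.
have hp0 : forall v, 0 <= p v := sq_ge0 (cs_sn hp).
have hs := cs_sn hq.
split.
  split; first by move=> x; exact: sq_ge0 hs _.
  split.
    by move=> x y; rewrite (linD Rl_lin); exact: sqD hs _ _.
  by move=> c x; rewrite (linZ Rl_lin) (sqZ hs).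
case: hp => _ [m [C' [C'0 HC']]].
exists m, (C * K * C'); split.
  by apply: mulr_ge0 => //; apply: mulr_ge0 => //; exact/ltW/K_gt0.
move=> x.
apply: le_trans (Rl_bound x hq Hb C0 hp0) _.
rewrite -[X in _ <= X]mulrA; apply: ler_wpM2l; first by apply: mulr_ge0 => //; exact/ltW/K_gt0.
exact: HC'.
Qed.

Lemma I_T k t x : 0 <= t -> I k (T t x) = T t (I k x).
Proof.
move=> t0; rewrite /I (lin_sum (Tlin t0)); apply: eq_bigr => j _.
rewrite (linZ (Tlin t0)) /f (linZ (Tlin t0)); congr (_ *: (_ *: _)).
by rewrite -TD ?nodes_ge0 // -TD ?nodes_ge0 // addrC.
Qed.

Lemma Rl_T t x : 0 <= t -> Rl (T t x) = T t (Rl x).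
Proof.
move=> t0.
apply: (cv_unique HP (Rl_cv (T t x))).
have := cv_op HP (TLX t0) (Rl_cv x).
by under eq_fun do rewrite -I_T //.
Qed.


Lemma dyad_bound y n (eps : R) k0 M : 0 <= eps ->
  (forall s, 0 <= s -> s < M%:R * h k0 -> P n (f y s - y) <= eps) ->
  P n (E (M%:R * h k0) *: T (M%:R * h k0) (Rl y) - Rl y + (M%:R * h k0)%:C%C *: y)
    <= eps * (M%:R * h k0).
Proof.
move=> eps0 Heps.
set t := M%:R * h k0.
have t0 : 0 <= t := nodes_ge0 M k0.
have [p [hp [C [C0 Hb]]]] := Tbound (Pcs HP n).
have hp0 : forall v, 0 <= p v := sq_ge0 (cs_sn hp).
have hPn := Psn HP n.
have cvG := cv_add HP (cv_sub HP (cv_scale HP (scv_const evseq (E t)) (cv_op HP (TLX t0) (Rl_cv y))) (Rl_cv y)) (cv_const HP evseq (t%:C%C *: y)).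
apply: (cv_le HP (Pcs HP n) cvG) => eta eta0 /=.
have [k2 Hk2] := exp_small (C * K * p y) eta0.
exists (maxn k0 k2) => k hk /=.
have kk0 : (k0 <= k)%N by apply: leq_trans hk; exact: leq_maxl.
have kk2 : (k2 <= k)%N by apply: leq_trans hk; exact: leq_maxr.
set Mk := (M * 2 ^ (k - k0))%N.
have tE : t = Mk%:R * h k by rewrite /t /Mk natrM -mulrA hmk.
set g := fun j : nat => (h k)%:C%C *: f y (j%:R * h k).
have H1 : E t *: T t (I k y) = \sum_(Mk <= j < Mk + Nk k) g j.
  rewrite sum_shift /I (lin_sum (Tlin t0)) scaler_sumr; apply: eq_bigr => j _.
  rewrite /g (linZ (Tlin t0)) scalerA mulrC -scalerA natrD mulrDl -tE addrC.
  by rewrite fshift // nodes_ge0.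
have H2 : t%:C%C *: y = \sum_(0 <= j < Mk) (h k)%:C%C *: y.
  by rewrite sumr_const_nat subn0 scalerMnl -rmorphMn -mulr_natl tE.
have H3 : \sum_(Mk <= j < Mk + Nk k) g j - I k y =
          \sum_(Nk k <= j < Nk k + Mk) g j - \sum_(0 <= j < Mk) g j.
  have e1 : \sum_(0 <= j < Mk + Nk k) g j = \sum_(0 <= j < Mk) g j + \sum_(Mk <= j < Mk + Nk k) g j.
    by rewrite (@big_cat_nat _ _ _ Mk) // leq_addr.
  have e2 : \sum_(0 <= j < Mk + Nk k) g j = I k y + \sum_(Nk k <= j < Nk k + Mk) g j.
    by rewrite addnC (@big_cat_nat _ _ _ (Nk k)) // leq_addr.
  set S1 := \sum_(0 <= j < Mk) g j in e1 *.
  set S2 := \sum_(Mk <= j < Mk + Nk k) g j in e1 *.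
  set S3 := \sum_(Nk k <= j < Nk k + Mk) g j in e2 *.
  set Ik := I k y in e2 *.
  have e3 : S1 + S2 = Ik + S3 by rewrite -e1 -e2.
  apply: (addIr S1); rewrite subrK addrAC [S2 + S1]addrC e3 addrAC subrr add0r.
  done.
rewrite H1 H3 H2.
have -> : \sum_(Nk k <= j < Nk k + Mk) g j - \sum_(0 <= j < Mk) g j + \sum_(0 <= j < Mk) (h k)%:C%C *: y
   = \sum_(Nk k <= j < Nk k + Mk) g j - \sum_(0 <= j < Mk) (h k)%:C%C *: (f y (j%:R * h k) - y).
  rewrite -addrA; congr (_ + _).
  rewrite -[LHS]opprK opprD opprK -sumrB; congr (- _); apply: eq_bigr => j _.
  by rewrite /g scalerBr.
apply: le_trans (sqD hPn _ _) _.
rewrite (sqN hPn).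
have Ht := @tailb (P n) p C y (h k) (Nk k) Mk Hb hPn C0 hp0 (h_gt0 k) (h_le1 k).
rewrite /Nk hk_nat in Ht.
have Hk := Hk2 k kk2.
have Hs : P n (\sum_(0 <= j < Mk) (h k)%:C%C *: (f y (j%:R * h k) - y)) <= eps * t.
  apply: le_trans (sq_sum hPn _ _) _.
  apply: (@le_trans _ _ (\sum_(0 <= j < Mk) h k * eps)).
    apply: ler_sum_nat => j /andP[_ jM].
    rewrite (sqZr hPn) ger0_norm; last exact/ltW/h_gt0.
    apply: ler_wpM2l; first exact/ltW/h_gt0.
    apply: Heps; first exact: nodes_ge0.
    by rewrite -/t tE ltr_pM2r ?h_gt0 // ltr_nat.
  rewrite sumr_const_nat subn0 -mulr_natl tE le_eqVlt; apply/orP; left; apply/eqP; ring.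
have : C * K * expR (- aa * k%:R) * p y = expR (- aa * k%:R) * (C * K * p y) by ring.
lra.
Qed.

Lemma dyadic_between (t d : R) : 0 <= t -> 0 < d -> exists k0 M, t < M%:R * h k0 /\ M%:R * h k0 < t + d.
Proof.
move=> t0 d0.
have [k0 Hk0] := h_small d0.
have hk := Hk0 k0 (leqnn _).
set x := t * (2 ^ k0)%:R.
have x0 : 0 <= x by apply: mulr_ge0 => //; exact: ler0n.
exists k0, (Num.trunc x).+1.
have H1 := truncnS_gt x.
have H2 : (Num.trunc x)%:R <= x by rewrite truncn_le.
have p0 : (0 : R) < (2 ^ k0)%:R by rewrite ltr0n expn_gt0.
have hE : h k0 * (2 ^ k0)%:R = 1 by rewrite /h mulVf // gt_eqF.
have tE : t = x * h k0 by rewrite /x -mulrA [_ * h k0]mulrC hE mulr1.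
have hk0 := h_gt0 k0.
split.
  by rewrite tE ltr_pM2r.
rewrite -natr1 mulrDl mul1r tE.
have : (Num.trunc x)%:R * h k0 <= x * h k0 by rewrite ler_pM2r.
lra.
Qed.

Definition Gf y t := E t *: T t (Rl y) - Rl y + t%:C%C *: y.

Lemma G_rcont y t : 0 <= t -> cv P (evr0 R) (fun r => Gf y (t + r)) (Gf y t).
Proof.
move=> t0.
set z := Rl y.
have cT : cv P (evr0 R) (fun r => T (t + r) z) (T t z).
  move=> n e e0; have [d [d0 Hd]] := Tcont z t0 n e0.
  exists d; split => // r r0 rd; apply: Hd; first lra.
  have -> : t + r - t = r by ring.
  by rewrite gtr0_norm.
have c1 := cv_scale HP scvE cT.
rewrite scale1r in c1.
have c2 := cv_scale HP (scv_const _ (E t)) c1.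
have sc : scv (evr0 R) (fun r => (t + r)%:C%C) (t%:C%C).
  move=> e e0; exists e; split => // r r0 re.
  have -> : ((t + r)%:C - t%:C)%C = (r%:C)%C :> R[i].
    by apply/eqP; rewrite eq_complex /= subrr eqxx andbT; apply/eqP; ring.
  by rewrite nc_real gtr0_norm.
have c3 := cv_scale HP sc (cv_const HP _ y).
have c4 := cv_add HP (cv_sub HP c2 (cv_const HP _ z)) c3.
apply: cv_ext c4; apply: ev_mono (ev_true _) => r _.
by rewrite /Gf ED scalerA.
Qed.

Lemma gen_bound y n (eps d : R) : 0 < eps -> 0 < d ->
  (forall s, 0 <= s -> s < d -> P n (f y s - y) <= eps) ->
  forall t, 0 < t -> t < d -> P n (Gf y t) <= eps * t.
Proof.
move=> e0 d0 Hf t t0 td.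
have hPn := Psn HP n.
rewrite -subr_le0; apply: le0_eps => e ee.
set eta := e / (eps + 1).
have eta0 : 0 < eta by apply: divr_gt0; lra.
have [d1 [d10 Hd1]] := G_rcont y (ltW t0) n eta0.
have dd : 0 < Num.min d1 (Num.min (d - t) eta).
  by rewrite !lt_min d10 eta0 subr_gt0 td.
have [k0 [M [h1 h2]]] := dyadic_between (ltW t0) dd.
set del := Num.min d1 (Num.min (d - t) eta) in dd h2.
have m1 : del <= d1 by rewrite /del ge_min lexx.
have m2 : del <= d - t by rewrite /del !ge_min lexx ?orbT ?orTb.
have m3 : del <= eta by rewrite /del !ge_min lexx ?orbT ?orTb.
set t1 := M%:R * h k0 in h1 h2.
have Hd : P n (Gf y t1) <= eps * t1.
  apply: dyad_bound; first exact: ltW.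
  move=> s s0 st1; apply: Hf => //; apply: lt_trans st1 _; rewrite -/t1; lra.
have Hr : P n (Gf y (t + (t1 - t)) - Gf y t) < eta.
  apply: Hd1; lra.
have et1 : t + (t1 - t) = t1 by ring.
rewrite et1 in Hr.
have := sq_tri hPn (Gf y t) (Gf y t1).
rewrite (sqB hPn) => Htri.
have : eps * t1 <= eps * (t + eta) by apply: ler_wpM2l; lra.
have : eps * eta + eta = e.
  have -> : eps * eta + eta = (eps + 1) * eta by ring.
  rewrite /eta mulrCA mulfV ?mulr1 //; rewrite gt_eqF //; lra.
lra.
Qed.

Lemma u1_cv y : cv P (evr0 R) (fun t => (t^-1)%:C%C *: (E t *: T t (Rl y) - Rl y)) (- y).
Proof.
move=> n e e0.
have hPn := Psn HP n.
have e20 : 0 < e / 2 by lra.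
have [d [d0 Hd]] := cv_cs HP (Pcs HP n) (fcont y) e20.
have Hf : forall s, 0 <= s -> s < d -> P n (f y s - y) <= e / 2.
  move=> s s0 sd; have [->|s0'] := eqVneq s 0.
    by rewrite f0 subrr (sq0 hPn); exact: ltW.
  have s0'' : 0 < s by rewrite lt_def s0' s0.
  have := Hd s s0'' sd; rewrite /=; exact: ltW.
exists d; split => // t t0 td.
have := gen_bound e20 d0 Hf t0 td.
have -> : (t^-1)%:C%C *: (E t *: T t (Rl y) - Rl y) - - y = (t^-1)%:C%C *: Gf y t.
  rewrite /Gf opprK [in RHS]scalerDr scalerA -rmorphM /= mulVf ?gt_eqF // scale1r.
  done.
rewrite (sqZr hPn) gtr0_norm ?invr_gt0 // => H.
have : t^-1 * P n (Gf y t) <= t^-1 * (e / 2 * t) by apply: ler_wpM2l => //; rewrite invr_ge0 ltW.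
rewrite mulrCA mulVf ?gt_eqF // mulr1.
lra.
Qed.

Definition E' t : R[i] := Eu (complex.Re lam * t) (complex.Im lam * t).
Lemma E'E t : E' t * E t = 1.
Proof. by rewrite /E' /E EuM !mulNr !subrr Eu00. Qed.

Lemma lam_eq : Complex (complex.Re lam) (complex.Im lam) = lam.
Proof. by case: lam. Qed.

Lemma Rl_gen y : D (Rl y) /\ A (Rl y) = lam *: Rl y - y.
Proof.
set z := Rl y.
have Hcv : cv P (evr0 R) (fun t => (t^-1)%:C%C *: (T t z - z)) (lam *: z - y).
  have c1 := cv_scale HP (scv_Eu (complex.Re lam) (complex.Im lam)) (u1_cv y).
  have c2 := cv_scale HP (scv_dEu (complex.Re lam) (complex.Im lam)) (cv_const HP _ z).
  have c3 := cv_add HP c1 c2.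
  rewrite scale1r lam_eq addrC in c3.
  apply: cv_ext c3; apply: ev_mono (ev_true _) => t _.
  rewrite -/(E' t) -/z mulrBr mulr1 scalerBl scalerBr !scalerA.
  rewrite [E' t *: (_ - _)]scalerBr !scalerA.
  rewrite mulrCA E'E mulr1 [E' t * _]mulrC addrA subrK scalerBr.
  done.
have Dz : D z by apply/(proj1 HG z); exists (lam *: z - y).
split => //.
have H := (proj2 HG) z Dz.
exact: (cv_unique HP (H : cv P (evr0 R) _ (A z)) Hcv).
Qed.

Lemma Rl_left x : D x -> Rl (lam *: x - A x) = x.
Proof.
move=> Dx.
have H0 := (proj2 HG) x Dx.
have H1 := cv_op HP Rl_LX (H0 : cv P (evr0 R) _ (A x)).
have [DRx ARx] := Rl_gen x.
have H2 : cv P (evr0 R) (fun t => Rl ((t^-1)%:C%C *: (T t x - x))) (A (Rl x)).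
  have H3 := (proj2 HG) (Rl x) DRx.
  apply: cv_ext (H3 : cv P (evr0 R) _ (A (Rl x))).
  exists 1; split => // t t0 _.
  by rewrite (linZ Rl_lin) (linB Rl_lin) Rl_T // ltW.
have := cv_unique HP H1 H2.
rewrite ARx => HR.
rewrite (linB Rl_lin) (linZ Rl_lin) HR opprB addrC subrK.
done.
Qed.

Lemma Rl_LX0 : LX0 P Rl.
Proof.
split; first exact: Rl_LX.
have K0 := K_gt0.
set mu := ((K^-1)%:C)%C : R[i].
exists mu; split.
  apply/eqP => /(complexI (R := R)) => H.
  by move: K0; rewrite -invr_gt0 H ltxx.
move=> q hq.
have hs := cs_sn hq.
have [p [hp [C [C0 HC]]]] := Hw hq.
exists p; split => //; exists C; split => //.
pose S v := [set q (rescaled T w i v) | i in [set: {t : R | 0 <= t}]].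
pose qh v := sup (S v).
have S0 : forall v, S v !=set0.
  by move=> v; exists (q (rescaled T w (exist _ 0 (lexx 0)) v)); exists (exist _ 0 (lexx 0)).
have Sub : forall v, ubound (S v) (C * p v).
  by move=> v _ [i _ <-]; exact: HC.
have Shs : forall v, has_sup (S v).
  by move=> v; split; [exact: S0 | exists (C * p v); exact: Sub].
have qa : forall v i, q (rescaled T w i v) <= qh v.
  by move=> v i; apply: sup_upper_bound (Shs v) _ _; exists i.
have qb : forall v, qh v <= C * p v.
  by move=> v; apply: ge_sup (S0 v) (Sub v).
have qc : forall v, q v <= qh v.
  move=> v; have := qa v (exist _ 0 (lexx 0)).
  by rewrite /rescaled /= mulr0 expR0 scale1r T0.
have Hres : forall v s, 0 <= s -> expR (- w * s) * q (T s v) <= qh v.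
  move=> v s s0; have := qa v (exist _ s s0).
  by rewrite /rescaled /= (sqZr hs) ger0_norm // ltW // expR_gt0.
have HI : forall v i k, q (rescaled T w i (I k v)) <= K * qh v.
  move=> v [t t0] k; rewrite /rescaled /= /I (lin_sum (Tlin t0)) scaler_sumr.
  apply: le_trans (sq_sum hs _ _) _.
  apply: (@le_trans _ _ (\sum_(0 <= j < Nk k) h k * expR (- aa * (0 + j%:R * h k)) * qh v)).
    apply: ler_sum => j _.
    set s := j%:R * h k.
    have s0 : 0 <= s := nodes_ge0 j k.
    rewrite (linZ (Tlin t0)) /f (linZ (Tlin t0)) -TD // !scalerA (sqZ hs).
    rewrite !Normc.normcM !nc_real ncE.
    rewrite (ger0_norm (ltW (expR_gt0 _))) (ger0_norm (ltW (h_gt0 k))).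
    have := Hres v (t + s) (addr_ge0 t0 s0).
    have hE : expR (- w * t) * expR (- complex.Re lam * s) =
              expR (- aa * s) * expR (- w * (t + s)).
      by rewrite -!expRD; congr expR; rewrite /aa; ring.
    have e1 := expR_gt0 (- aa * s).
    have hk := h_gt0 k.
    rewrite add0r.
    move=> H.
    rewrite mulrCA hE.
    have -> : h k * (expR (- aa * s) * expR (- w * (t + s))) * q (T (t + s) v) =
       h k * expR (- aa * s) * (expR (- w * (t + s)) * q (T (t + s) v)) by rewrite !mulrA.
    apply: ler_wpM2l => //; apply: mulr_ge0; [exact: ltW | exact: ltW].
  rewrite -mulr_suml.
  have qh0 : 0 <= qh v by apply: le_trans (qc v); exact: sq_ge0 hs _.
  apply: ler_wpM2r => //.
  have := geom (Nk k) (h_gt0 k) (h_le1 k) (lexx 0).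
  by rewrite mulr0 expR0 mul1r.
have Hstep : forall v, qh (mu *: Rl v) <= qh v.
  move=> v; apply: ge_sup (S0 _) _ => _ [[t t0] _ <-].
  rewrite /rescaled /= (linZ (Tlin t0)) scalerA mulrC -scalerA (sqZ hs) nc_real ger0_norm; last first.
    by rewrite invr_ge0 ltW.
  have hR : q (rescaled T w (exist _ t t0) (Rl v)) <= K * qh v.
    have cc := cv_scale HP (scv_const evseq ((expR (- w * t))%:C%C)) (cv_op HP (TLX t0) (Rl_cv v)).
    apply: (cv_le HP hq cc).
    move=> eta eta0; apply: ev_mono (ev_true evseq) => k _.
    have := HI v (exist _ t t0) k; rewrite /rescaled /= => H; lra.
  move: hR; rewrite /rescaled /= => hR.
  have : K^-1 * q ((expR (- w * t))%:C%C *: T t (Rl v)) <= K^-1 * (K * qh v).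
    by apply: ler_wpM2l => //; rewrite invr_ge0 ltW.
  by rewrite mulrA mulVf ?mul1r // gt_eqF.
move=> n x.
apply: le_trans (qc _) _; apply: le_trans _ (qb x).
elim: n => [|n IH] //=.
exact: le_trans (Hstep _) IH.
Qed.

Lemma resolvent : resolvent_C P D A lam.
Proof.
split.
  move=> x y Dx Dy H.
  by rewrite -(Rl_left Dx) -(Rl_left Dy) H.
have Hs : forall y, D (Rl y) /\ lam *: Rl y - A (Rl y) = y.
  move=> y; have [Dz Az] := Rl_gen y; split => //.
  by rewrite Az opprB addrCA subrr addr0.
split.
  by move=> y; exists (Rl y); exact: Hs.
exists Rl; split; [exact: Hs | exact: Rl_LX0].
Qed.

End Semigroup.

Unset Implicit Arguments.

Theorem theorem4p1 (R : realType) (X : lmodType R[i]) (P : nat -> X -> R)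
  (T : R -> X -> X) (D : set X) (A : X -> X) :
  frechet P ->
  C0_semigroup P T ->
  exp_equicont P T ->
  generator P T D A ->
  ((-oo <= spectral_bound P D A)%E /\
   (spectral_bound P D A <= growth_bound P T)%E /\
   (growth_bound P T < +oo)%E).
Proof.
move=> HP HT [w Hw] HG.
split; first exact: leNye.
split; last first.
  apply: (@le_lt_trans _ _ (w%:E)); last exact: ltry.
  by apply: ereal_inf_lbound; exists w.
apply: ge_ereal_sup => _ [lam Hsp <-].
apply: le_ereal_inf_tmp => _ [w' Hw' <-].
rewrite lee_fin leNgt; apply/negP => Hlt.
apply: Hsp.
exact: (resolvent HP HT HG Hw' Hlt).
Qed.
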